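(* Let $r\ge1$ and let $x_1,\ldots,x_r,y_1,\ldots,y_r$ be positive integers which are the parameters of a balanced lobster, i.e. they satisfy, for all $i=1,\ldots,r$: $x_i=y_{r-\frac{i-1}{2}}$ and $y_i=x_{r-\frac{i-1}{2}}$ when $i$ is odd, and $x_i=x_{i/2}$ and $y_i=y_{i/2}$ when $i$ is even. Let $i$ be an odd integer and $j$ an even integer with $1\le i,j\le r$. Then (i) $\sum_{t=\frac{i+1}{2}}^{i}x_t=\sum_{t=r-\frac{i-1}{2}}^{r}y_t$; (ii) $\sum_{t=\frac{i+1}{2}}^{i}y_t=\sum_{t=r-\frac{i-1}{2}}^{r}x_t$; (iii) $\sum_{t=\frac{j}{2}+1}^{j}x_t=\sum_{t=r-\frac{j}{2}+1}^{r}y_t$; (iv) $\sum_{t=\frac{j}{2}+1}^{j}y_t=\sum_{t=r-\frac{j}{2}+1}^{r}x_t$.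
   Context: The lobster in question consists of adjacent vertices $v_1,v_2$; $v_1$ is adjacent to $s_1\ge0$ leaves and to vertices $u_{11},\ldots,u_{1r}$, where $u_{1i}$ is adjacent to $x_i\ge1$ further leaves; $v_2$ is adjacent to $s_2\ge0$ leaves and to vertices $u_{21},\ldots,u_{2r}$, where $u_{2j}$ is adjacent to $y_j\ge1$ further leaves. It is called balanced when the displayed relations between the $x_i$ and $y_i$ hold. *)

(* Defs.v *)
From mathcomp Require Import all_boot.
Set Implicit Arguments. Unset Strict Implicit. Unset Printing Implicit Defensive.

(* Parameters of the lobster are indexed 1..r: x t, y t for 1 <= t <= r. *)
Definition balanced (r : nat) (x y : nat -> nat) : Prop :=
  forall i, 1 <= i <= r ->
    (odd i -> x i = y (r - (i - 1) %/ 2) /\ y i = x (r - (i - 1) %/ 2)) /\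
    (~~ odd i -> x i = x (i %/ 2) /\ y i = y (i %/ 2)).

(* Main.v *)
Require Import Defs.
From mathcomp Require Import all_boot.
From mathcomp Require Import zify.

Lemma aux (r : nat) (x y : nat -> nat) : balanced r x y ->
  forall m, (2 * m).+1 <= r ->
   \sum_(m.+1 <= t < (2 * m).+2) x t = \sum_(r - m <= t < r.+1) y t /\
   \sum_(m.+1 <= t < (2 * m).+2) y t = \sum_(r - m <= t < r.+1) x t.
Proof.
move=> B; elim=> [|m IH] Hm.
  have [H _] := B 1 ltac:(lia).
  have [h1 h2] := H isT.
  rewrite subn0 !big_nat1 h1 h2 (_ : (1-1)%/2 = 0) // subn0; by split.
have [IH1 IH2] := IH (ltac:(lia)).
have [Ho _] := B (2 * m).+3 ltac:(lia).
have [_ He] := B (2 * m).+2 ltac:(lia).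
have [o1 o2] := Ho ltac:(by rewrite /= oddM).
have [e1 e2] := He ltac:(by rewrite /= oddM).
have E2 : (2 * m.+1).+2 = (2 * m).+4 by lia.
have Ed : (2*m).+2 %/ 2 = m.+1 by lia.
have Eo : ((2*m).+3 - 1) %/ 2 = m.+1 by lia.
rewrite Ed in e1 e2; rewrite Eo in o1 o2.
have P : forall F : nat -> nat, \sum_(m.+2 <= t < (2 * m).+4) F t
   = \sum_(m.+2 <= t < (2 * m).+2) F t + F (2 * m).+2 + F (2 * m).+3.
  move=> F; rewrite big_nat_recr /=; last by lia.
  by rewrite big_nat_recr /=; last by lia.
rewrite E2 !P.
have L : forall F : nat -> nat, \sum_(m.+1 <= t < (2 * m).+2) F t
        = F m.+1 + \sum_(m.+2 <= t < (2 * m).+2) F t.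
  by move=> F; rewrite big_ltn //; lia.
have R : forall F : nat -> nat, \sum_(r - m.+1 <= t < r.+1) F t
        = F (r - m.+1) + \sum_(r - m <= t < r.+1) F t.
  move=> F; rewrite big_ltn; last by lia.
  by have -> : (r - m.+1).+1 = r - m by lia.
rewrite L in IH1; rewrite L in IH2.
rewrite !R -IH1 -IH2 e1 e2 o1 o2; split; lia.
Qed.

Theorem lemma4p8 (r : nat) (x y : nat -> nat) :
  1 <= r ->
  (forall t, 1 <= t <= r -> 0 < x t /\ 0 < y t) ->
  balanced r x y ->
  forall i j : nat, odd i -> ~~ odd j -> 1 <= i <= r -> 1 <= j <= r ->
    [/\ \sum_((i + 1) %/ 2 <= t < i.+1) x t = \sum_(r - (i - 1) %/ 2 <= t < r.+1) y t,
        \sum_((i + 1) %/ 2 <= t < i.+1) y t = \sum_(r - (i - 1) %/ 2 <= t < r.+1) x t,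
        \sum_(j %/ 2 + 1 <= t < j.+1) x t = \sum_(r - j %/ 2 + 1 <= t < r.+1) y t
      & \sum_(j %/ 2 + 1 <= t < j.+1) y t = \sum_(r - j %/ 2 + 1 <= t < r.+1) x t].
Proof.
move=> r1 _ B i j oi ej Hi Hj.
have Ei := odd_double_half i; rewrite oi -mul2n in Ei.
have Ej := odd_double_half j; rewrite (negbTE ej) add0n -mul2n in Ej.
set m := i./2 in Ei; set n := j./2 in Ej.
clearbody m n.
have {}Ei : i = (2*m).+1 by rewrite -Ei.
subst i j.
have [A1 A2] := aux r x y B m ltac:(lia).
have n1 : 1 <= n by lia.
have [C1 C2] := aux r x y B n.-1 ltac:(lia).
have F1 : ((2*m).+1 + 1) %/ 2 = m.+1 by lia.
have F3 : ((2*m).+1 - 1) %/ 2 = m by lia.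
have Ed : (2 * n) %/ 2 = n by lia.
have G1 : (2*n) %/ 2 + 1 = n.+1 by rewrite Ed addn1.
have G2 : r - (2*n) %/ 2 + 1 = r - n.-1.
  by rewrite Ed; move: (prednK n1); move: (n.-1) => k Hk; lia.
have Lj : forall F : nat -> nat, F (2 * n) = F n -> \sum_(n.+1 <= t < (2*n).+1) F t
     = \sum_(n.-1.+1 <= t < (2 * n.-1).+2) F t.
  move=> F hF.
  rewrite big_nat_recr /=; last by lia.
  rewrite prednK //.
  have -> : (2 * n.-1).+2 = 2 * n by move: (prednK n1); move: (n.-1) => k Hk; lia.
  rewrite (big_ltn (m := n)) ?hF; last by lia.
  by rewrite addnC.
have [_ He] := B (2 * n) ltac:(lia).
have [f1 f2] := He ltac:(by rewrite oddM).
rewrite Ed in f1 f2.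
rewrite F1 F3 G1 G2 !Lj //.
Qed.
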